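(* Suppose that $X(\mathbb{R}^n)$ is a translation-invariant Banach function space. If $w(x):=e^{c|x|}$ for $x\in\mathbb{R}^n$ with a constant $c>0$, then the weighted Banach function space $X(\mathbb{R}^n,w)$ does not satisfy the weak doubling property.
   Context: Banach function spaces: let $\mathfrak{M}^+(\mathbb{R}^n)$ be the set of measurable functions with values in $[0,\infty]$. A Banach function norm $\rho:\mathfrak{M}^+\to[0,\infty]$ satisfies, for all $f,g,f_j\in\mathfrak{M}^+$, $a\ge0$, measurable $E$: (A1) $\rho(f)=0\iff f=0$ a.e., $\rho(af)=a\rho(f)$, $\rho(f+g)\le\rho(f)+\rho(g)$; (A2) $0\le g\le f$ a.e. implies $\rho(g)\le\rho(f)$; (A3) $0\le f_j\uparrow f$ a.e. implies $\rho(f_j)\uparrow\rho(f)$; (A4) $|E|<\infty$ implies $\rho(\chi_E)<\infty$; (A5) $|E|<\infty$ implies $\int_Ef\le C_E\rho(f)$ with $C_E$ independent of $f$. $X(\mathbb{R}^n)$ is the set of measurable complex $f$ with $\rho(|f|)<\infty$, $\|f\|_X=\rho(|f|)$. $X$ is translation-invariant if $\|u(\cdot-y)\|_X=\|u\|_X$ for all $y\in\mathbb{R}^n$, $u\in X$. For a weight $w$, $X(\mathbb{R}^n,w)=\{f: fw\in X\}$ with $\|f\|_{X(\mathbb{R}^n,w)}=\|fw\|_X$. Weak doubling property: a Banach function space $Z(\mathbb{R}^n)$ has it if there is $\tau>1$ with $\liminf_{R\to\infty}\big(\inf_{y\in\mathbb{R}^n}\|\chi_{B(y,\tau R)}\|_{Z}/\|\chi_{B(y,R)}\|_{Z}\big)<\infty$,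 where $B(y,R)$ is the open ball of radius $R$ centered at $y$. *)

(* Defs.v *)
From HB Require Import structures.
From mathcomp Require Import all_boot all_order all_algebra.
From mathcomp Require Import all_classical all_reals all_analysis.
From mathcomp Require Import measurable_realfun.
Set Implicit Arguments. Unset Strict Implicit. Unset Printing Implicit Defensive.
Import Order.TTheory GRing.Theory Num.Theory.
Import numFieldNormedType.Exports.
Local Open Scope classical_set_scope.
Local Open Scope ring_scope.

Fixpoint Rp (R : realType) (k : nat) : {d : measure_display & measurableType d} :=
  match k with
  | 0 => existT (fun d => measurableType d) _ (measurableTypeR R : measurableType _)
  | k'.+1 => existT (fun d => measurableType d) _
      ((projT2 (Rp R k') * measurableTypeR R)%type : measurableType _)
  end.

Fixpoint lamp (R : realType) (k : nat) : {measure set (projT2 (Rp R k)) -> \bar R} :=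
  match k with
  | 0 => @lebesgue_measure R
  | k'.+1 => (lamp R k' \x (@lebesgue_measure R))%E
  end.

(** Points of R^n, n = k.+1, are the elements of [Rn R k] (nested pairs);
    [leb R k] is the n-dimensional Lebesgue measure (iterated product of
    the one-dimensional Lebesgue measure). *)
Notation Rn R k := (projT2 (Rp R k)).
Definition leb (R : realType) (k : nat) := lamp R k.

Fixpoint subp (R : realType) (k : nat) : Rn R k -> Rn R k -> Rn R k :=
  match k return Rn R k -> Rn R k -> Rn R k with
  | 0 => fun x y => ((x : R) - (y : R))%R
  | k'.+1 => fun x y => (@subp R k' x.1 y.1, ((x.2 : R) - (y.2 : R))%R)
  end.

Fixpoint sqnormp (R : realType) (k : nat) : Rn R k -> R :=
  match k return Rn R k -> R with
  | 0 => fun x => ((x : R) ^+ 2)%R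
  | k'.+1 => fun x => (@sqnormp R k' x.1 + (x.2 : R) ^+ 2)%R
  end.

Definition normp (R : realType) (k : nat) (x : Rn R k) : R := Num.sqrt (sqnormp x).

Definition ballp (R : realType) (k : nat) (y : Rn R k) (r : R) : set (Rn R k) :=
  [set x | normp (subp x y) < r].

Local Open Scope ereal_scope.

Definition Mplus (R : realType) (k : nat) (f : Rn R k -> \bar R) : Prop :=
  measurable_fun [set: Rn R k] f /\ (forall x, 0 <= f x).

Definition banach_function_norm (R : realType) (k : nat)
    (rho : (Rn R k -> \bar R) -> \bar R) : Prop :=
  let mu := leb R k in
  (forall f, Mplus f -> 0 <= rho f) /\
  (forall f, Mplus f -> (rho f = 0 <-> {ae mu, forall x, f x = 0})) /\
  (forall f (a : R), Mplus f -> (0 <= a)%R ->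
     rho (fun x => a%:E * f x) = a%:E * rho f) /\
  (forall f g, Mplus f -> Mplus g -> rho (f \+ g) <= rho f + rho g) /\
  (forall f g, Mplus f -> Mplus g ->
     {ae mu, forall x, g x <= f x} -> rho g <= rho f) /\
  (forall (F : nat -> Rn R k -> \bar R) f, (forall j, Mplus (F j)) -> Mplus f ->
     {ae mu, forall x, {homo (fun j => F j x) : i j / (i <= j)%N >-> i <= j}
                       /\ (F ^~ x @ \oo --> f x)} ->
     {homo (fun j => rho (F j)) : i j / (i <= j)%N >-> i <= j} /\
     ((fun j => rho (F j)) @ \oo --> rho f)) /\
  (forall E : set (Rn R k), measurable E -> mu E < +oo ->
     rho (fun x => (\1_E x)%:E) < +oo) /\
  (forall E : set (Rn R k), measurable E -> mu E < +oo ->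
     exists C_E : R, forall f, Mplus f ->
       \int[mu]_(x in E) f x <= C_E%:E * rho f).

(** ||u||_X = rho(|u|); X is translation-invariant:
    ||u(. - y)||_X = ||u||_X for all y and all u in X *)
Definition translation_invariant (R : realType) (k : nat)
    (rho : (Rn R k -> \bar R) -> \bar R) : Prop :=
  forall (u : Rn R k -> R) (y : Rn R k),
    measurable_fun [set: Rn R k] u ->
    rho (fun x => (`|u x|)%:E) < +oo ->
    rho (fun x => (`|u (subp x y)|)%:E) = rho (fun x => (`|u x|)%:E).

Definition weighted_norm (R : realType) (k : nat)
    (rho : (Rn R k -> \bar R) -> \bar R) (w : Rn R k -> R) :
    (Rn R k -> \bar R) -> \bar R :=
  fun f => rho (fun x => f x * (w x)%:E).

Definition weak_doubling (R : realType) (k : nat)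
    (rhoZ : (Rn R k -> \bar R) -> \bar R) : Prop :=
  exists tau : R, (1 < tau)%R /\
    limf_einf (fun r : R =>
       ereal_inf [set rhoZ (fun x => (\1_(ballp y (tau * r)) x)%:E) /
                      rhoZ (fun x => (\1_(ballp y r) x)%:E) | y in [set: Rn R k]])
      (pinfty_nbhs R) < +oo.

(* Main.v *)
Require Import Defs.
From HB Require Import structures.
From mathcomp Require Import all_boot all_order all_algebra.
From mathcomp Require Import all_classical all_reals all_analysis.
From mathcomp Require Import measurable_realfun.
From mathcomp Require Import ring lra zify.
Import Order.TTheory GRing.Theory Num.Theory.
Local Open Scope ring_scope.
Set Implicit Arguments. Unset Strict Implicit. Unset Printing Implicit Defensive.

Local Open Scope classical_set_scope.

Section Geo.
Variable R : realType.

Fixpoint addp (k : nat) : Rn R k -> Rn R k -> Rn R k :=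
  match k return Rn R k -> Rn R k -> Rn R k with
  | 0 => fun x y => ((x : R) + (y : R))%R
  | k'.+1 => fun x y => (@addp k' x.1 y.1, ((x.2 : R) + (y.2 : R))%R)
  end.
Fixpoint smulp (k : nat) (a : R) : Rn R k -> Rn R k :=
  match k return Rn R k -> Rn R k with
  | 0 => fun x => (a * (x : R))%R
  | k'.+1 => fun x => (@smulp k' a x.1, (a * (x.2 : R))%R)
  end.
Fixpoint dotp (k : nat) : Rn R k -> Rn R k -> R :=
  match k return Rn R k -> Rn R k -> R with
  | 0 => fun x y => ((x : R) * (y : R))%R
  | k'.+1 => fun x y => (@dotp k' x.1 y.1 + (x.2 : R) * (y.2 : R))%R
  end.
Fixpoint e0 (k : nat) : Rn R k :=
  match k return Rn R k with
  | 0 => (1 : R)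
  | k'.+1 => (@e0 k', (0 : R))
  end.
Fixpoint incube (k : nat) : Rn R k -> R -> Prop :=
  match k return Rn R k -> R -> Prop with
  | 0 => fun v L => `|(v : R)| < L
  | k'.+1 => fun v L => @incube k' v.1 L /\ `|(v.2 : R)| < L
  end.

Lemma sqnormp_ge0 k (x : Rn R k) : 0 <= sqnormp x.
Proof.
elim: k x => [|k IH] x /=; first exact: sqr_ge0.
by rewrite addr_ge0 ?IH ?sqr_ge0.
Qed.

Lemma normp_ge0 k (x : Rn R k) : 0 <= normp x.
Proof. exact: sqrtr_ge0. Qed.

Lemma sqr_normp k (x : Rn R k) : normp x ^+ 2 = sqnormp x.
Proof. by rewrite sqr_sqrtr // sqnormp_ge0. Qed.

Lemma sqnormp_addp k (x y : Rn R k) :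
  sqnormp (addp x y) = sqnormp x + 2 * dotp x y + sqnormp y.
Proof.
elim: k x y => [|k IH] x y /=; first by ring.
rewrite IH; ring.
Qed.

Lemma dotp_cs k (x y : Rn R k) : dotp x y <= normp x * normp y.
Proof.
elim: k x y => [|k IH] x y /=.
  rewrite /normp /= !sqrtr_sqr -normrM; exact: ler_norm.
have h1 := IH x.1 y.1.
rewrite /normp /=.
set p := normp x.1. set q := normp y.1.
have hp : sqnormp x.1 = p ^+ 2 by rewrite sqr_normp.
have hq : sqnormp y.1 = q ^+ 2 by rewrite sqr_normp.
rewrite hp hq.
set u := Num.sqrt _. set v := Num.sqrt _.
have u0 : 0 <= u by exact: sqrtr_ge0.
have v0 : 0 <= v by exact: sqrtr_ge0.
have hu : u ^+ 2 = p ^+ 2 + x.2 ^+ 2 by rewrite sqr_sqrtr // addr_ge0 ?sqr_ge0.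
have hv : v ^+ 2 = q ^+ 2 + y.2 ^+ 2 by rewrite sqr_sqrtr // addr_ge0 ?sqr_ge0.
have p0 : 0 <= p by exact: normp_ge0.
have q0 : 0 <= q by exact: normp_ge0.
apply: (le_trans (lerD h1 (lexx _))).
have key : (p * q + x.2 * y.2) ^+ 2 <= (u * v) ^+ 2.
  rewrite exprMn hu hv.
  have : 0 <= (p * y.2 - q * x.2) ^+ 2 by exact: sqr_ge0.
  move=> H; nra.
have uv0 : 0 <= u * v by exact: mulr_ge0.
case: (lerP (p * q + x.2 * y.2) 0) => [h|h]; first exact: le_trans h uv0.
by rewrite -(ler_pXn2r (n:=2)) // ?nnegrE // ltW.
Qed.

Lemma normp_addp k (x y : Rn R k) : normp (addp x y) <= normp x + normp y.
Proof.
rewrite {1}/normp -(ger0_norm (addr_ge0 (normp_ge0 x) (normp_ge0 y))) -sqrtr_sqr.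
rewrite ler_sqrt ?sqr_ge0 // sqnormp_addp -!sqr_normp.
have := dotp_cs x y; nra.
Qed.

Lemma subp_split k (x y z : Rn R k) : subp x y = addp (subp x z) (subp z y).
Proof.
elim: k x y z => [|k IH] x y z /=; first by ring.
by rewrite -IH; congr pair; ring.
Qed.

Lemma subp_addp k (y v : Rn R k) : subp (addp y v) y = v.
Proof.
elim: k y v => [|k IH] y v /=; first by ring.
by rewrite IH; case: v => a b /=; congr pair; ring.
Qed.

Lemma addp_scal k (y : Rn R k) a : addp y (smulp a y) = smulp (1 + a) y.
Proof.
elim: k y => [|k IH] y /=; first by ring.
by rewrite IH; congr pair; ring.
Qed.

Lemma sqnormp_scal k (y : Rn R k) a : sqnormp (smulp a y) = a ^+ 2 * sqnormp y.
Proof.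
elim: k y => [|k IH] y /=; first by ring.
by rewrite IH; ring.
Qed.

Lemma normp_scal k (y : Rn R k) a : normp (smulp a y) = `|a| * normp y.
Proof. by rewrite /normp sqnormp_scal sqrtrM ?sqr_ge0 // sqrtr_sqr. Qed.

Lemma sqnormp_subC k (x y : Rn R k) : sqnormp (subp x y) = sqnormp (subp y x).
Proof.
elim: k x y => [|k IH] x y /=; first by ring.
by rewrite IH; ring.
Qed.

Lemma normp_subC k (x y : Rn R k) : normp (subp x y) = normp (subp y x).
Proof. by rewrite /normp sqnormp_subC. Qed.

Lemma normp_tri k (x y z : Rn R k) :
  normp (subp x y) <= normp (subp x z) + normp (subp z y).
Proof. by rewrite (subp_split x y z); exact: normp_addp. Qed.

Lemma addp_sub k (x y : Rn R k) : addp (subp x y) y = x.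
Proof.
elim: k x y => [|k IH] x y /=; first by ring.
by rewrite IH; case: x => a b /=; congr pair; ring.
Qed.

Lemma normp_le k (x y : Rn R k) : normp x <= normp (subp x y) + normp y.
Proof. by rewrite -{1}(addp_sub x y); exact: normp_addp. Qed.

Lemma sqnormp_e0 k : sqnormp (e0 k) = 1.
Proof. by elim: k => [|k IH] /=; [rewrite expr1n | rewrite IH expr0n addr0]. Qed.

Lemma normp_e0 k : normp (e0 k) = 1.
Proof. by rewrite /normp sqnormp_e0 sqrtr1. Qed.

Lemma incube_sq k (v : Rn R k) L : incube v L -> sqnormp v < k.+1%:R * L ^+ 2.
Proof.
elim: k v => [|k IH] v /=.
  move=> h; rewrite mul1r -real_normK ?num_real //.
  by rewrite ltr_pXn2r // ?nnegrE //; exact: le_trans (ltW h).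
move=> [h1 h2]; have := IH _ h1.
have : v.2 ^+ 2 < L ^+ 2.
  rewrite -real_normK ?num_real // ltr_pXn2r // ?nnegrE //; exact: le_trans (ltW h2).
rewrite -[(k.+2)%:R]natr1; nra.
Qed.

Lemma sq_incube k (v : Rn R k) L : 0 < L -> sqnormp v < L ^+ 2 -> incube v L.
Proof.
move=> L0; elim: k v => [|k IH] v /=.
  by rewrite -real_normK ?num_real // ltr_pXn2r // ?nnegrE // ltW.
move=> h; have h1 := sqnormp_ge0 v.1; have h2 := sqr_ge0 v.2; split.
  apply: IH; lra.
have : v.2 ^+ 2 < L ^+ 2 by lra.
by rewrite -real_normK ?num_real // ltr_pXn2r // ?nnegrE // ltW.
Qed.

Lemma normp_lt k (v : Rn R k) r : 0 < r -> (normp v < r) = (sqnormp v < r ^+ 2).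
Proof.
move=> r0; rewrite /normp -{1}(ger0_norm (ltW r0)) -sqrtr_sqr ltr_sqrt.
  by [].
by rewrite exprn_gt0 // normr_gt0 gt_eqF.
Qed.

Lemma incube_normp k (v : Rn R k) L : 0 < L -> incube v L -> normp v < k.+1%:R * L.
Proof.
move=> L0 /incube_sq h; rewrite normp_lt ?mulr_gt0 //.
apply: (lt_le_trans h); rewrite exprMn ler_pM2r ?exprn_gt0 //.
rewrite expr2 ler_peMl // ler1n //.
Qed.

End Geo.



Section Meas.
Variable R : realType.

Lemma subp_meas k (y : Rn R k) : measurable_fun setT (fun x : Rn R k => subp x y).
Proof.
elim: k y => [|k IH] y /=.
  exact: measurable_funB.
apply: measurable_fun_pair.
  exact: (measurableT_comp (IH y.1) measurable_fst).
exact: (@measurable_funB _ _ _ _ (fun x : Rn R k.+1 => x.2) (fun=> y.2) measurable_snd (measurable_cst _)).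
Qed.

Lemma sqnormp_meas k : measurable_fun setT (@sqnormp R k).
Proof.
elim: k => [|k IH] /=.
  exact: exprn_measurable.
apply: measurable_funD.
  exact: (measurableT_comp IH measurable_fst).
by apply: measurable_funX; exact: measurable_snd.
Qed.

Lemma normp_meas k : measurable_fun setT (@normp R k).
Proof.
change (measurable_fun setT ((@Num.sqrt R) \o (@sqnormp R k))).
exact: (measurableT_comp (continuous_measurable_fun (@sqrt_continuous R)) (@sqnormp_meas k)).
Qed.

Lemma abs_set (L : R) : [set v : R | `|v| < L] = `]-L, L[%classic.
Proof.
by apply/seteqP; split => v /=; rewrite in_itv /= ltr_norml.
Qed.

Lemma incube_meas k (L : R) : measurable [set v : Rn R k | incube v L].
Proof.
elim: k => [|k IH] /=.
  by rewrite abs_set; exact: measurable_itv.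
change (measurable ([set v : Rn R k | incube v L] `*` [set v : R | `|v| < L])).
by apply: measurableX => //; rewrite abs_set; exact: measurable_itv.
Qed.

Lemma incube_leb k (L : R) : 0 < L ->
  leb R k [set v : Rn R k | incube v L] = ((2 * L) ^+ k.+1)%:E.
Proof.
move=> L0; elim: k => [|k IH] /=.
  rewrite /leb /= abs_set lebesgue_measure_itv /= ifT; last by rewrite lte_fin; lra.
  by rewrite -EFinD expr1; congr EFin; ring.
change (lamp R k.+1 ([set v : Rn R k | incube v L] `*` [set v : R | `|v| < L]) = ((2 * L) ^+ k.+2)%:E).
rewrite /= product_measure1E //; last 2 first.
- exact: incube_meas.
- by rewrite abs_set; exact: measurable_itv.
have := IH; rewrite /leb => ->.
rewrite abs_set. have h := @lebesgue_measure_itv R `](- L)%R, L[%R. 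
rewrite [X in (_ * X)%E](_ : _ = lebesgue_measure `](- L)%R, L[%classic) //. rewrite h /= ifT; last by rewrite lte_fin; lra.
by rewrite -EFinD -EFinM !exprS; congr EFin; ring.
Qed.

End Meas.



Section Rho.
Variables (R : realType) (k : nat) (rho : (Rn R k -> \bar R) -> \bar R).
Hypothesis Hrho : banach_function_norm rho.
Hypothesis HT : translation_invariant rho.

Definition Mp (f : Rn R k -> R) := measurable_fun setT f /\ forall x, 0 <= f x.

Definition E (f : Rn R k -> R) : Rn R k -> \bar R := fun x => (f x)%:E.

Lemma Mp_Mplus f : Mp f -> Mplus (E f).
Proof.
move=> [mf f0]; split; first exact/measurable_EFinP.
by move=> x; rewrite /E lee_fin.
Qed.

Lemma rho_ge0 f : Mp f -> (0 <= rho (E f))%E.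
Proof. by move=> /Mp_Mplus; case: Hrho => H0 _; exact: H0. Qed.

Lemma rho_mono f g : Mp f -> Mp g -> (forall x, f x <= g x) -> (rho (E f) <= rho (E g))%E.
Proof.
move=> mf mg fg.
case: Hrho => _ [_ [_ [_ [Hmono _]]]].
apply: Hmono; [exact: Mp_Mplus|exact: Mp_Mplus|].
by apply: aeW => x; rewrite /E lee_fin.
Qed.

Lemma rho_scale (a : R) f : 0 <= a -> Mp f ->
  rho (E (fun x => a * f x)) = (a%:E * rho (E f))%E.
Proof.
move=> a0 mf.
case: Hrho => _ [_ [Hhom _]].
rewrite -Hhom //; last exact: Mp_Mplus.
Qed.

Lemma rho_add f g : Mp f -> Mp g ->
  (rho (E (fun x => (f x + g x)%R)) <= rho (E f) + rho (E g))%E.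
Proof.
move=> mf mg.
case: Hrho => _ [_ [_ [Hsub _]]].
have -> : E (fun x => f x + g x) = (E f \+ E g)%E by apply/funext => x.
by apply: Hsub; exact: Mp_Mplus.
Qed.

Lemma rho_zero : rho (E (fun=> 0)) = 0%E.
Proof.
case: Hrho => _ [HA1 _].
apply/(HA1 _ _).2; first by apply: Mp_Mplus; split => //; exact: measurable_cst.
exact: aeW.
Qed.

Lemma rho_transl (u : Rn R k -> R) y : Mp u -> (rho (E u) < +oo)%E ->
  rho (E (fun x => u (subp x y))) = rho (E u).
Proof.
move=> [mu u0] fin.
have h1 : E u = (fun x => (`|u x|)%:E) by apply/funext => x; rewrite ger0_norm.
have h2 : E (fun x => u (subp x y)) = (fun x => (`|u (subp x y)|)%:E).
  by apply/funext => x; rewrite ger0_norm.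
rewrite h1 h2; apply: HT => //; by rewrite -h1.
Qed.

Lemma Mp_indic (A : set (Rn R k)) : measurable A -> Mp (\1_A).
Proof. by move=> mA; split; [exact: measurable_indic|move=> x; rewrite indicE ler0n]. Qed.

Lemma rho_fin (A : set (Rn R k)) : measurable A -> (leb R k A < +oo)%E ->
  (rho (E (\1_A)) < +oo)%E.
Proof. by move=> mA fA; case: Hrho => _ [_ [_ [_ [_ [_ [HA4 _]]]]]]; exact: HA4. Qed.

Lemma rho_pos (A : set (Rn R k)) : measurable A -> (0 < leb R k A)%E ->
  (0 < rho (E (\1_A)))%E.
Proof.
move=> mA pA.
rewrite lt0e rho_ge0 ?andbT; last exact: Mp_indic.
apply/eqP => h0.
case: Hrho => _ [HA1 _].
have := (HA1 _ (Mp_Mplus (Mp_indic mA))).1 h0.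
move=> [N [mN N0 sub]].
have AN : A `<=` N.
  move=> x Ax; apply: sub => /=; rewrite /E indicE mem_set //.
  by move=> /eqP; rewrite eqe oner_eq0.
have : (leb R k A <= leb R k N)%E := le_measure (leb R k) (mem_set mA) (mem_set mN) AN.
by rewrite N0 leNgt pA.
Qed.

End Rho.



Fixpoint ext (A : Type) (R : realType) (L : R) (s : seq A) : seq (A * R) :=
  match s with
  | [::] => [::]
  | c :: s' => (c, - L) :: (c, 0) :: (c, L) :: ext L s'
  end.

Fixpoint corners (R : realType) (k : nat) (L : R) : seq (Rn R k) :=
  match k return seq (Rn R k) with
  | 0 => [:: (- L : R); (0 : R); (L : R)]
  | k'.+1 => ext L (@corners R k' L)
  end.

Lemma size_ext (A : Type) (R : realType) (L : R) (s : seq A) : size (ext L s) = (3 * size s)%N.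
Proof. by elim: s => //= a s ->; lia. Qed.

Lemma size_corners (R : realType) k (L : R) : size (corners k L) = (3 ^ k.+1)%N.
Proof. elim: k => [|k IH] /=; first by rewrite expn1. by rewrite size_ext IH -expnS. Qed.

Lemma ext_in (A : Type) (R : realType) (L : R) (s : seq A) c v :
  List.In c s -> (v = - L \/ v = 0 \/ v = L) -> List.In (c, v) (ext L s).
Proof.
elim: s => //= a s IH [->|cs] hv.
  by case: hv => [->|[->|->]]; [left|right; left|right; right; left].
by right; right; right; apply: IH.
Qed.

Lemma cover1 (R : realType) (L v : R) : 0 < L -> `|v| < 2 * L ->
  exists c : R, (c = - L \/ c = 0 \/ c = L) /\ `|v - c| < L.
Proof.
move=> L0; rewrite ltr_norml => /andP[h1 h2].
case: (lerP v (- L / 2)) => ha.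
  exists (- L); split; first by left.
  rewrite ltr_norml; apply/andP; split; lra.
case: (lerP (L / 2) v) => hb.
  exists L; split; first by right; right.
  rewrite ltr_norml; apply/andP; split; lra.
exists 0; split; first by right; left.
rewrite subr0 ltr_norml; apply/andP; split; lra.
Qed.

Lemma cover (R : realType) k (L : R) (v : Rn R k) : 0 < L -> incube v (2 * L) ->
  exists c, List.In c (corners k L) /\ incube (subp v c) L.
Proof.
move=> L0; elim: k v => [|k IH] v /=.
  move=> /(cover1 L0) [c [hc hv]]; exists c; split => //.
  by case: hc => [->|[->|->]]; [left|right; left|right; right; left].
move=> [/IH [c [hc hv]] /(cover1 L0) [d [hd h2]]].
exists (c, d); split => //; exact: ext_in.
Qed.

Lemma big_ge_in (A : Type) (R : realType) (F : A -> R) (s : seq A) c :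
  (forall i, 0 <= F i) -> List.In c s -> F c <= \sum_(i <- s) F i.
Proof.
move=> F0; elim: s => //= a s IH [->|cs]; rewrite big_cons.
  by rewrite lerDl sumr_ge0.
by apply: (le_trans (IH cs)); rewrite lerDr.
Qed.

Section Cube.
Variables (R : realType) (k : nat) (rho : (Rn R k -> \bar R) -> \bar R).
Hypothesis Hrho : banach_function_norm rho.
Hypothesis HT : translation_invariant rho.

Definition C (L : R) := [set v : Rn R k | incube v L].
Definition Q (L : R) := rho (E (\1_(C L))).

Lemma C_meas L : measurable (C L).
Proof. exact: incube_meas. Qed.

Lemma Q_fin L : 0 < L -> (Q L < +oo)%E.
Proof.
move=> L0; apply: (rho_fin Hrho (C_meas L)).
by rewrite /C incube_leb // ltry.
Qed.

Lemma Q_pos L : 0 < L -> (0 < Q L)%E.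
Proof.
move=> L0; apply: (rho_pos Hrho (C_meas L)).
rewrite /C incube_leb // lte_fin exprn_gt0 //; lra.
Qed.

Definition q L := fine (Q L).

Lemma QE L : 0 < L -> Q L = (q L)%:E.
Proof.
move=> L0; rewrite /q fineK // ge0_fin_numE ?Q_fin //.
exact: (rho_ge0 Hrho (Mp_indic (C_meas L))).
Qed.

Lemma q_pos L : 0 < L -> 0 < q L.
Proof. by move=> L0; have := Q_pos L0; rewrite QE // lte_fin. Qed.

Lemma Mp_tr L y : Mp (fun x => \1_(C L) (subp x y)).
Proof.
split; last by move=> x; rewrite indicE ler0n.
change (measurable_fun setT ((\1_(C L) : Rn R k -> R) \o (fun x => subp x y))).
apply: measurableT_comp; last exact: subp_meas.
apply: measurable_indic; exact: C_meas.
Qed.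

Lemma Q_tr L y : 0 < L -> rho (E (fun x => \1_(C L) (subp x y))) = Q L.
Proof.
move=> L0; apply: (@rho_transl R k rho HT (\1_(C L)) y); first exact: Mp_indic (C_meas L).
exact: Q_fin.
Qed.

Lemma sum_bound L (s : seq (Rn R k)) : 0 < L ->
  Mp (fun x => \sum_(c <- s) \1_(C L) (subp x c)) /\
  (rho (E (fun x => (\sum_(c <- s) \1_(C L) (subp x c))%R)) <= ((size s)%:R * q L)%:E)%E.
Proof.
move=> L0; elim: s => [|a s [IHm IHb]].
  have -> : (fun x : Rn R k => (\sum_(c <- [::]) \1_(C L) (subp x c) : R)) = (fun=> (0:R)).
    by apply: boolp.funext => x; rewrite big_nil.
  split; first by split => //; exact: measurable_cst.
  by rewrite (rho_zero Hrho) mul0r.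
have -> : (fun x : Rn R k => (\sum_(c <- a :: s) \1_(C L) (subp x c) : R)) =
  fun x => (\1_(C L) (subp x a) + \sum_(c <- s) \1_(C L) (subp x c))%R.
  by apply: boolp.funext => x; rewrite big_cons.
split.
  split; first exact: measurable_funD (Mp_tr L a).1 IHm.1.
  move=> x; apply: addr_ge0; [exact: (Mp_tr L a).2|exact: IHm.2].
apply: (le_trans (rho_add Hrho (Mp_tr L a) IHm)).
rewrite Q_tr // QE //.
apply: le_trans (leeD2l _ IHb) _.
by rewrite -EFinD lee_fin /= -[(size s).+1]addn1 natrD mulrDl mul1r addrC.
Qed.

Lemma q_double L : 0 < L -> q (2 * L) <= ((3 ^ k.+1)%N)%:R * q L.
Proof.
move=> L0.
have L20 : 0 < 2 * L by lra.
have [m1 b1] := sum_bound (corners k L) L0.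
rewrite -lee_fin -QE // -(size_corners k L).
apply: le_trans b1; apply: (rho_mono Hrho (Mp_indic (C_meas _)) m1) => x.
rewrite {1}indicE; case: (boolP (x \in C (2 * L))) => hx.
  have : incube x (2 * L) by move: hx; rewrite inE.
  move=> /(cover L0) [c [hc hxc]].
  have hb := @big_ge_in _ R (fun c => \1_(C L) (subp x c)) _ c (fun i => ler0n _ _) hc.
  apply: le_trans hb; by rewrite indicE mem_set.
by apply: sumr_ge0 => i _; rewrite indicE ler0n.
Qed.

Lemma q_iter L m : 0 < L -> q L <= (((3 ^ k.+1)%N)%:R) ^+ m * q (L / 2 ^+ m).
Proof.
move=> L0; elim: m => [|m IH]; first by rewrite expr0 mul1r divr1.
apply: le_trans IH _.
have h : L / 2 ^+ m = 2 * (L / 2 ^+ m.+1) by rewrite exprS; field.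
rewrite h [X in _ <= X * _]exprSr -mulrA ler_pM2l; last by rewrite exprn_gt0 // ltr0n expn_gt0.
by apply: q_double; rewrite divr_gt0 // exprn_gt0.
Qed.

End Cube.



Fixpoint zerop (R : realType) (k : nat) : Rn R k :=
  match k return Rn R k with
  | 0 => (0 : R)
  | k'.+1 => (@zerop R k', (0 : R))
  end.

Lemma sqnormp_sub0 (R : realType) k (x : Rn R k) : sqnormp (subp x (zerop R k)) = sqnormp x.
Proof. by elim: k x => [|k IH] x /=; rewrite ?IH subr0. Qed.

Lemma normp_sub0 (R : realType) k (x : Rn R k) : normp (subp x (zerop R k)) = normp x.
Proof. by rewrite /normp sqnormp_sub0. Qed.

Lemma smulp_smulp (R : realType) k (y : Rn R k) a b : smulp a (smulp b y) = smulp (a * b) y.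
Proof. by elim: k y => [|k IH] y /=; rewrite ?IH mulrA. Qed.

Lemma normp_subp_le (R : realType) k (x y : Rn R k) : normp (subp x y) <= normp x + normp y.
Proof.
apply: le_trans (normp_tri x y (zerop R k)) _.
by rewrite normp_sub0 normp_subC normp_sub0.
Qed.

Definition dir (R : realType) k (y : Rn R k) : Rn R k :=
  if normp y == 0 then e0 R k else smulp (normp y)^-1 y.

Lemma normp_dir (R : realType) k (y : Rn R k) : normp (dir y) = 1.
Proof.
rewrite /dir; case: eqP => h; first exact: normp_e0.
rewrite normp_scal ger0_norm ?invr_ge0 ?normp_ge0 // mulVf //; exact/eqP.
Qed.

Lemma far_point (R : realType) k (y : Rn R k) (t : R) : 0 <= t ->
  let z := addp y (smulp t (dir y)) in
  normp (subp z y) = t /\ normp y + t <= normp z.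
Proof.
move=> t0 z.
have h1 : normp (subp z y) = t.
  by rewrite /z subp_addp normp_scal normp_dir mulr1 ger0_norm.
split => //.
rewrite /z /dir; case: eqP => h.
  have := normp_subp_le (addp y (smulp t (e0 R k))) y.
  rewrite subp_addp normp_scal normp_e0 mulr1 ger0_norm // h; lra.
rewrite smulp_smulp addp_scal normp_scal ger0_norm; last first.
  by rewrite addr_ge0 // mulr_ge0 // invr_ge0 normp_ge0.
rewrite mulrDl mul1r -mulrA mulVf; last exact/eqP.
by rewrite mulr1.
Qed.

Section Main.
Variables (R : realType) (k : nat) (rho : (Rn R k -> \bar R) -> \bar R) (c tau : R).
Hypothesis Hrho : banach_function_norm rho.
Hypothesis HT : translation_invariant rho.
Hypothesis c0 : 0 < c.
Hypothesis tau1 : 1 < tau.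

Definition w (x : Rn R k) := expR (c * normp x).
Let n : R := k.+1%:R.
Let K : R := (3 ^ k.+1)%N%:R.

Lemma w_meas : measurable_fun setT w.
Proof.
change (measurable_fun setT (expR \o (fun x : Rn R k => c * normp x))).
apply: measurableT_comp; first exact: measurable_expR.
apply: measurable_funM; [exact: measurable_cst|exact: normp_meas].
Qed.

Lemma w_ge1 x : 1 <= w x.
Proof. rewrite /w -expR0 ler_expR; apply: mulr_ge0; [exact: ltW|exact: normp_ge0]. Qed.

Lemma ball_meas (y : Rn R k) r : measurable (ballp y r).
Proof.
have mf : measurable_fun setT (fun x => normp (subp x y)).
  change (measurable_fun setT ((@normp R k) \o (fun x => subp x y))).
  apply: measurableT_comp; [exact: normp_meas|exact: subp_meas].
have := mf measurableT _ (measurable_itv `]-oo, r[%R); rewrite setTI.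
have -> : ballp y r = (fun x => normp (subp x y)) @^-1` `]-oo, r[.
  by apply/seteqP; split => x /=; rewrite in_itv /= ?andbT.
by [].
Qed.

Lemma Mp_scale (a : R) (f : Rn R k -> R) : 0 <= a -> Mp f -> Mp (fun x => a * f x).
Proof.
move=> a0 [mf f0]; split; last by move=> x; rewrite mulr_ge0.
by apply: measurable_funM => //; exact: measurable_cst.
Qed.

Lemma Mp_bw (y : Rn R k) r : Mp (fun x => \1_(ballp y r) x * w x).
Proof.
split; last by move=> x; rewrite mulr_ge0 ?expR_ge0 // indicE ler0n.
apply: measurable_funM; [exact: measurable_indic (ball_meas y r)|exact: w_meas].
Qed.

Lemma den_upper (y : Rn R k) r : 0 < r ->
  (rho (E (fun x => (\1_(ballp y r) x * w x)%R)) <=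
   (expR (c * (normp y + r)))%:E * Q rho r)%E.
Proof.
move=> r0.
rewrite -(Q_tr Hrho HT y r0) -(rho_scale Hrho) ?expR_ge0 //; last exact: Mp_tr.
apply: (rho_mono Hrho (Mp_bw y r) (Mp_scale (expR_ge0 _) (Mp_tr _ _))) => x.
rewrite !indicE; case: (boolP (x \in ballp y r)) => hx.
  have hb : normp (subp x y) < r by move: hx; rewrite inE.
  have hc : incube (subp x y) r.
    by apply: (sq_incube (v := subp x y) r0); rewrite -normp_lt.
  rewrite (mem_set (hc : C r (subp x y))) /= mul1r mulr1 /w ler_expR ler_pM2l //.
  have := normp_le x y; lra.
by rewrite mul0r mulr_ge0 ?expR_ge0 ?ler0n.
Qed.

Lemma den_lower (y : Rn R k) r s : 0 < s -> n * s <= r ->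
  (Q rho s <= rho (E (fun x => (\1_(ballp y r) x * w x)%R)))%E.
Proof.
move=> s0 nsr.
rewrite -(Q_tr Hrho HT y s0).
apply: (rho_mono Hrho (Mp_tr _ _) (Mp_bw y r)) => x.
rewrite !indicE; case: (boolP (subp x y \in C s)) => hx; last first.
  by rewrite mulr_ge0 ?expR_ge0 ?ler0n.
have hc : incube (subp x y) s by move: hx; rewrite inE.
have hb : normp (subp x y) < n * s by exact: incube_normp.
have hb' : ballp y r x by rewrite /ballp /=; lra.
by rewrite (mem_set hb') mul1r w_ge1.
Qed.

Lemma num_lower (y : Rn R k) r s t : 0 < s -> 0 <= t -> n * s + t <= tau * r ->
  ((expR (c * (normp y + t - n * s)%R))%:E * Q rho s <=
   rho (E (fun x => (\1_(ballp y (tau * r)) x * w x)%R)))%E.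
Proof.
move=> s0 t0 hst.
have [hzy hz] := far_point y t0.
set z := addp y (smulp t (dir y)) in hzy hz.
rewrite -(Q_tr Hrho HT z s0) -(rho_scale Hrho) ?expR_ge0 //; last exact: Mp_tr.
apply: (rho_mono Hrho (Mp_scale (expR_ge0 _) (Mp_tr _ _)) (Mp_bw y _)) => x.
rewrite !indicE; case: (boolP (subp x z \in C s)) => hx; last first.
  by rewrite mulr0 mulr_ge0 ?expR_ge0 ?ler0n.
have hc : incube (subp x z) s by move: hx; rewrite inE.
have hb : normp (subp x z) < n * s by exact: incube_normp.
have h1 := normp_tri x y z.
have h2 := normp_le z x.
have h3 := normp_subC z x.
have hb' : ballp y (tau * r) x by rewrite /ballp /=; lra.
rewrite (mem_set hb') mul1r mulr1 /w ler_expR ler_pM2l //; lra.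
Qed.


Lemma ratio_lower (y : Rn R k) r m : 0 < r -> n / 2 ^+ m <= 1 -> 4 * (n / 2 ^+ m) <= tau - 1 ->
  ((expR (c * ((tau - 1) * r / 2)) / K ^+ m)%:E <=
   weighted_norm rho w (fun x => (\1_(ballp y (tau * r)) x)%:E) /
   weighted_norm rho w (fun x => (\1_(ballp y r) x)%:E))%E.
Proof.
move=> r0 hb1 hb2.
have p2 : 0 < 2 ^+ m :> R by rewrite exprn_gt0.
have n0 : 0 < n by rewrite /n ltr0n.
have K0 : 0 < K by rewrite /K ltr0n expn_gt0.
have Km0 : 0 < K ^+ m by rewrite exprn_gt0.
set b := n / 2 ^+ m in hb1 hb2.
have b0 : 0 < b by rewrite /b divr_gt0.
set s := r / 2 ^+ m.
have s0 : 0 < s by rewrite /s divr_gt0.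
have ns : n * s = b * r by rewrite /s /b; ring.
have nsr : n * s <= r by rewrite ns; nra.
set t := tau * r - n * s.
have t0 : 0 <= t by rewrite /t ns; nra.
have eN : weighted_norm rho w (fun x => (\1_(ballp y (tau * r)) x)%:E) =
    rho (E (fun x => (\1_(ballp y (tau * r)) x * w x)%R)).
  by rewrite /weighted_norm; congr rho; apply/funext => x; rewrite /E EFinM.
have eD : weighted_norm rho w (fun x => (\1_(ballp y r) x)%:E) =
    rho (E (fun x => (\1_(ballp y r) x * w x)%R)).
  by rewrite /weighted_norm; congr rho; apply/funext => x; rewrite /E EFinM.
rewrite eN eD.
have hN' : ((expR (c * (normp y + t - n * s)%R))%:E * Q rho s <=
   rho (E (fun x => (\1_(ballp y (tau * r)) x * w x)%R)))%E.
  apply: num_lower => //; rewrite /t; lra.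
have hDu := den_upper y r0.
have hDl := den_lower y s0 nsr.
have hq : q rho r <= K ^+ m * q rho s := q_iter Hrho HT m r0.
have qs0 : 0 < q rho s := q_pos Hrho s0.
rewrite (QE Hrho r0) in hDu.
rewrite (QE Hrho s0) in hDl hN'.
have [d Dd] : exists d, rho (E (fun x => (\1_(ballp y r) x * w x)%R)) = d%:E.
  move: hDu hDl; case: (rho _) => [d _ _| |]; first by exists d.
    by rewrite leye_eq.
  by rewrite leeNy_eq.
rewrite Dd in hDu hDl *.
rewrite lee_fin in hDu; rewrite lee_fin in hDl.
have d0 : 0 < d := lt_le_trans qs0 hDl.
rewrite inver gt_eqF // lee_pdivlMr // -EFinM.
apply: le_trans hN'; rewrite -EFinM lee_fin.
set G := expR (c * ((tau - 1) * r / 2)).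
set W := expR (c * (normp y + r)).
have G0 : 0 < G := expR_gt0 _.
have W0 : 0 < W := expR_gt0 _.
have h1 : d <= W * (K ^+ m * q rho s).
  apply: le_trans hDu _; rewrite ler_pM2l //.
have h2 : G / K ^+ m * d <= W * G * q rho s.
  apply: le_trans (_ : G / K ^+ m * (W * (K ^+ m * q rho s)) <= _).
    by rewrite ler_pM2l // divr_gt0.
  rewrite le_eqVlt; apply/orP; left; apply/eqP; field; exact: lt0r_neq0.
apply: le_trans h2 _; rewrite ler_pM2r //.
rewrite /W /G -expRD ler_expR -mulrDr ler_pM2l //.
rewrite /t ns; nra.
Qed.

End Main.

Local Close Scope classical_set_scope.
Unset Implicit Arguments.
Set Strict Implicit.

Theorem theorem3p7 (R : realType) (k : nat)
    (rho : (Rn R k -> \bar R) -> \bar R) (c : R) :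
  banach_function_norm rho ->
  translation_invariant rho ->
  0 < c ->
  ~ weak_doubling (weighted_norm rho (fun x : Rn R k => expR (c * normp x))).
Proof.
move=> Hrho HT c0 [tau [tau1 hlim]].
set n : R := k.+1%:R.
set K : R := (3 ^ k.+1)%N%:R.
have n0 : 0 < n by rewrite /n ltr0n.
have K0 : 0 < K by rewrite /K ltr0n expn_gt0.
set N := n * (1 + 4 / (tau - 1)).
set m := (Num.Def.trunc N).+1.
have hNm : N < m%:R := truncnS_gt N.
have hm2 : m%:R <= 2 ^+ m :> R.
  by rewrite -natrX ler_nat ltnW // ltn_expl.
have a0 : 0 < 2 ^+ m :> R by rewrite exprn_gt0.
have t0 : 0 < tau - 1 by lra.
have e4 : (tau - 1) * (4 / (tau - 1)) = 4 by field; exact: lt0r_neq0.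
have hq : 0 <= 4 / (tau - 1) by rewrite divr_ge0 //; lra.
have hNa : N <= 2 ^+ m by lra.
have hb1 : n / 2 ^+ m <= 1.
  rewrite ler_pdivrMr // mul1r; apply: le_trans hNa; rewrite /N ler_peMr //; lra.
have hb2 : 4 * (n / 2 ^+ m) <= tau - 1.
  rewrite mulrA ler_pdivrMr //.
  have : (tau - 1) * N <= (tau - 1) * 2 ^+ m by rewrite ler_pM2l.
  rewrite /N; nra.
have Km0 : 0 < K ^+ m by rewrite exprn_gt0.
set A := c * (tau - 1) / 2.
have A0 : 0 < A by rewrite /A divr_gt0 // mulr_gt0.
move: hlim; set L := limf_einf _ _ => hlim.
have key : forall M : R, (M%:E <= L)%E.
  move=> M.
  set r0 := `|M| * K ^+ m / A.
  have r00 : 0 <= r0 by rewrite /r0; apply: divr_ge0; [apply: mulr_ge0 => //; exact: ltW|exact: ltW].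
  rewrite /L limf_einfE; apply: le_ereal_sup_tmp.
  eexists; first by exists [set r | r0 < r]%classic; [exists r0; split => //; exact: num_real|reflexivity].
  apply: le_ereal_inf_tmp => _ [r hr <-].
  have r0r : r0 < r := hr.
  have rpos : 0 < r := le_lt_trans r00 r0r.
  apply: le_ereal_inf_tmp => _ [y _ <-].
  apply: le_trans (ratio_lower Hrho HT c0 y rpos hb1 hb2).
  rewrite lee_fin ler_pdivlMr //.
  have := expR_ge1Dx (c * ((tau - 1) * r / 2)).
  have : `|M| * K ^+ m < r * A by rewrite -ltr_pdivrMr.
  have : M <= `|M| := ler_norm M.
  rewrite /A; nra.
move: hlim key; case: L => [l _ key|//|_ key].
  by have := key (l + 1); rewrite lee_fin; lra.
by have := key 0; rewrite leeNy_eq.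
Qed.
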